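(* Let $p \geq 5$ and let $L$ be the Laplacian of the graph $K_p \oplus C_\infty$. Let $E_K \subset l^2$ be the span of the vectors $e_{-1}-e_{-k}$, $k = 2,\ldots,p-1$ (equivalently, the set of $v \in l^2$ supported on $\{-p+1,\ldots,-1\}$ with $\sum_{j=-p+1}^{-1} v_j = 0$), and let $E_K^\perp$ be its orthogonal complement in $l^2$. For $\lambda > 4$ set $$\sigma_+(\lambda) = \tfrac12\Big[(2-\lambda) + \sqrt{(2-\lambda)^2-4}\Big], \qquad F(\lambda) = (1-\lambda)\sigma_+(\lambda) - (p-\lambda)(1-\lambda) + (p-1).$$ Then $\lambda > 4$ is an eigenvalue of $L$ with a corresponding eigenvector $v \in l^2 \cap E_K^\perp$ if and only if $F(\lambda) = 0$. Furthermore, $F(\lambda)=0$ has exactly one solution in $(p,p+2)$ and no solutions in $(4,p] \cup [p+2,+\infty)$.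
   Context: The graph $K_p \oplus C_\infty$ has vertex set $\{-p+1,\ldots,0\} \cup \{1,2,3,\ldots\}$, with edges between every pair of distinct vertices in $\{-p+1,\ldots,0\}$, the edge $\{0,1\}$, and the edges $\{j,j+1\}$ for all $j \geq 1$. $l^2$ is the real Hilbert space of square-summable real functions on the vertex set, with the standard inner product; $e_j$ is the indicator vector of vertex $j$. The Laplacian acts by $(Lv)_i = \deg(i)\, v_i - \sum_{j \sim i} v_j$. An eigenvalue with eigenvector $v \in l^2$, $v \neq 0$, means $Lv = \lambda v$. *)

(* Defs.v *)
From Stdlib Require Import Reals Lra ZArith List Bool.
From Coquelicot Require Import Coquelicot.
Open Scope R_scope.

(* Vertices of K_p (+) C_oo are the integers i with 1 - p <= i.
   A real function on the vertex set is represented as v : Z -> R,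
   required to vanish off the vertex set. *)

Definition zrange (a b : Z) : list Z :=
  map (fun k => (a + Z.of_nat k)%Z) (seq 0 (Z.to_nat (b - a + 1))).

Definition adjb (p : nat) (i j : Z) : bool :=
  let lo := (1 - Z.of_nat p)%Z in
  (((lo <=? i)%Z && (i <=? 0)%Z && (lo <=? j)%Z && (j <=? 0)%Z && negb (i =? j)%Z)
  || ((i =? 0)%Z && (j =? 1)%Z) || ((i =? 1)%Z && (j =? 0)%Z)
  || ((1 <=? i)%Z && (j =? i + 1)%Z) || ((1 <=? j)%Z && (i =? j + 1)%Z))%bool.

(* all neighbours of i lie in this finite window *)
Definition window (p : nat) (i : Z) : list Z :=
  zrange (1 - Z.of_nat p) (Z.max 1 i + 1).

Definition nbrs (p : nat) (i : Z) : list Z := filter (adjb p i) (window p i).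

Definition deg (p : nat) (i : Z) : nat := length (nbrs p i).

Definition Lap (p : nat) (v : Z -> R) (i : Z) : R :=
  INR (deg p i) * v i - fold_right Rplus 0 (map v (nbrs p i)).

Definition is_vertex (p : nat) (i : Z) : Prop := (1 - Z.of_nat p <= i)%Z.

Definition vtx (p : nat) (n : nat) : Z := (1 - Z.of_nat p + Z.of_nat n)%Z.

Definition l2 (p : nat) (v : Z -> R) : Prop :=
  (forall i, ~ is_vertex p i -> v i = 0) /\
  ex_series (fun n => (v (vtx p n))^2).

Definition inner (p : nat) (v w : Z -> R) : R :=
  Series (fun n => v (vtx p n) * w (vtx p n)).

Definition in_EK (p : nat) (w : Z -> R) : Prop :=
  l2 p w /\
  (forall i, ~ (1 - Z.of_nat p <= i <= -1)%Z -> w i = 0) /\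
  fold_right Rplus 0 (map w (zrange (1 - Z.of_nat p) (-1))) = 0.

Definition in_EK_perp (p : nat) (v : Z -> R) : Prop :=
  l2 p v /\ forall w, in_EK p w -> inner p v w = 0.

Definition eig_EKperp (p : nat) (lam : R) : Prop :=
  exists v : Z -> R,
    l2 p v /\ (exists i, v i <> 0) /\ in_EK_perp p v /\
    forall i, is_vertex p i -> Lap p v i = lam * v i.

Definition sigma_plus (lam : R) : R :=
  ((2 - lam) + sqrt ((2 - lam)^2 - 4)) / 2.

Definition Ffun (p : nat) (lam : R) : R :=
  (1 - lam) * sigma_plus lam - (INR p - lam) * (1 - lam) + (INR p - 1).

(* Main.v *)
Require Import Defs.
From Stdlib Require Import Reals ZArith.
From Coquelicot Require Import Coquelicot.
From Stdlib Require Import Lra Lia List Bool.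
Open Scope R_scope.

Definition SZ (l : list Z) (g : Z -> R) : R := fold_right Rplus 0 (map g l).

Lemma SZ_app l1 l2 g : SZ (l1 ++ l2) g = SZ l1 g + SZ l2 g.
Proof. unfold SZ. induction l1; simpl; [lra|]. rewrite IHl1; lra. Qed.

Lemma SZ_const l g c : (forall x, In x l -> g x = c) -> SZ l g = INR (length l) * c.
Proof.
  unfold SZ. induction l; intros H; cbn [map fold_right length]; [simpl; lra|].
  rewrite IHl by (intros; apply H; simpl; auto).
  rewrite H by (simpl; auto). rewrite S_INR. lra.
Qed.

Lemma SZ_ext l f g : (forall x, In x l -> f x = g x) -> SZ l f = SZ l g.
Proof.
  unfold SZ. induction l; intros H; simpl; [lra|].
  rewrite IHl by (intros; apply H; simpl; auto). rewrite H by (simpl; auto). lra.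
Qed.

Lemma SZ_minus l f g : SZ l (fun x => f x - g x) = SZ l f - SZ l g.
Proof. unfold SZ. induction l; simpl; [lra|]. rewrite IHl; lra. Qed.

Lemma zrange_nil a b : (b < a)%Z -> zrange a b = nil.
Proof. intros. unfold zrange. replace (Z.to_nat (b - a + 1)) with 0%nat by lia. reflexivity. Qed.

Lemma zrange_cons a b : (a <= b)%Z -> zrange a b = a :: zrange (a + 1) b.
Proof.
  intros. unfold zrange.
  replace (Z.to_nat (b - a + 1)) with (S (Z.to_nat (b - (a + 1) + 1))) by lia.
  simpl. f_equal; [lia|].
  rewrite <- seq_shift, map_map. apply map_ext. intros; lia.
Qed.

Lemma zrange_length a b : length (zrange a b) = Z.to_nat (b - a + 1).
Proof. unfold zrange. rewrite length_map, length_seq. reflexivity. Qed.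

Lemma zrange_In a b x : In x (zrange a b) -> (a <= x <= b)%Z.
Proof.
  unfold zrange. rewrite in_map_iff. intros [k [<- Hk]]. apply in_seq in Hk. lia.
Qed.

Lemma zrange_split_aux n : forall a b m, Z.to_nat (m - a) = n -> (a <= m <= b + 1)%Z ->
  zrange a b = zrange a (m - 1) ++ zrange m b.
Proof.
  induction n; intros a b m Hn Hm.
  - replace m with a by lia. rewrite (zrange_nil a (a-1)) by lia. reflexivity.
  - rewrite (zrange_cons a b) by lia. rewrite (zrange_cons a (m-1)) by lia.
    simpl. f_equal. apply IHn; lia.
Qed.

Lemma zrange_split a b m : (a <= m <= b + 1)%Z -> zrange a b = zrange a (m - 1) ++ zrange m b.
Proof. intros. eapply zrange_split_aux; eauto. Qed.

Lemma SZ_ind a b x : (a <= x <= b)%Z ->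
  SZ (zrange a b) (fun j => if Z.eqb j x then 1 else 0) = 1.
Proof.
  intros. rewrite (zrange_split a b x) by lia. rewrite (zrange_cons x b) by lia.
  rewrite SZ_app. unfold SZ at 2. simpl. rewrite Z.eqb_refl. fold (SZ (zrange (x+1) b) (fun j => if Z.eqb j x then 1 else 0)).
  rewrite !SZ_const with (c := 0).
  - lra.
  - intros y Hy. apply zrange_In in Hy. destruct (Z.eqb_spec y x); [lia|auto].
  - intros y Hy. apply zrange_In in Hy. destruct (Z.eqb_spec y x); [lia|auto].
Qed.

Lemma Lap_sum p v i : Lap p v i = SZ (window p i) (fun j => if adjb p i j then v i - v j else 0).
Proof.
  unfold Lap, deg, nbrs, SZ. generalize (window p i). induction l; simpl; [lra|].
  destruct (adjb p i a); cbn [filter map fold_right length]; rewrite <- IHl; try rewrite S_INR; lra.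
Qed.

Lemma adjb_iff p i j : adjb p i j = true <->
  ((1 - Z.of_nat p <= i <= 0 /\ 1 - Z.of_nat p <= j <= 0 /\ i <> j)
   \/ (i = 0 /\ j = 1) \/ (i = 1 /\ j = 0) \/ (1 <= i /\ j = i + 1) \/ (1 <= j /\ i = j + 1))%Z.
Proof.
  unfold adjb. rewrite !orb_true_iff, !andb_true_iff, negb_true_iff, !Z.leb_le, !Z.eqb_eq, Z.eqb_neq.
  tauto.
Qed.

Lemma adjb_t p i j : ((1 - Z.of_nat p <= i <= 0 /\ 1 - Z.of_nat p <= j <= 0 /\ i <> j)
   \/ (i = 0 /\ j = 1) \/ (i = 1 /\ j = 0) \/ (1 <= i /\ j = i + 1) \/ (1 <= j /\ i = j + 1))%Z -> adjb p i j = true.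
Proof. apply adjb_iff. Qed.

Lemma adjb_f p i j : ~((1 - Z.of_nat p <= i <= 0 /\ 1 - Z.of_nat p <= j <= 0 /\ i <> j)
   \/ (i = 0 /\ j = 1) \/ (i = 1 /\ j = 0) \/ (1 <= i /\ j = i + 1) \/ (1 <= j /\ i = j + 1))%Z -> adjb p i j = false.
Proof. intros H. destruct (adjb p i j) eqn:E; auto. apply adjb_iff in E. tauto. Qed.

Lemma window_K p i : (1 <= p)%nat -> (i <= 1)%Z -> window p i = zrange (1 - Z.of_nat p) (-1) ++ (0 :: 1 :: 2 :: nil)%Z.
Proof.
  intros. unfold window. rewrite Z.max_l by lia. rewrite (zrange_split _ _ 0) by lia.
  reflexivity.
Qed.

Lemma window_P p i : (1 <= p)%nat -> (1 <= i)%Z -> window p i = zrange (1 - Z.of_nat p) (i - 2) ++ (i - 1 :: i :: i + 1 :: nil)%Z.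
Proof.
  intros. unfold window. rewrite Z.max_r by lia. rewrite (zrange_split _ _ (i - 1)) by lia.
  replace (i - 1 - 1)%Z with (i - 2)%Z by lia. f_equal.
  rewrite zrange_cons by lia. rewrite zrange_cons by lia. rewrite zrange_cons by lia.
  rewrite zrange_nil by lia. repeat f_equal; lia.
Qed.

Lemma sum_n_seq (a : nat -> R) N : sum_n a N = fold_right Rplus 0 (map a (seq 0 (S N))).
Proof.
  assert (Hf : forall l c, fold_right Rplus c l = fold_right Rplus 0 l + c).
  { induction l; intros; simpl; [lra|]. rewrite IHl. lra. }
  induction N.
  - rewrite sum_O. simpl. lra.
  - rewrite sum_Sn, seq_S, map_app, fold_right_app, IHN. simpl.
    rewrite (Hf _ (a (S N) + 0)). unfold plus; simpl. lra.
Qed.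

Lemma is_series_fin (a : nat -> R) N : (forall n, (N < n)%nat -> a n = 0) -> is_series a (sum_n a N).
Proof.
  intros H. unfold is_series. apply (filterlim_ext_loc (fun _ => sum_n a N)).
  - exists N. intros n Hn. induction n.
    + replace N with 0%nat by lia. reflexivity.
    + destruct (Nat.eq_dec N (S n)). { subst; reflexivity. }
      rewrite sum_Sn, <- IHn by lia. rewrite H by lia. unfold plus; simpl. lra.
  - apply filterlim_const.
Qed.

Lemma sum_n_single m c n : sum_n (fun k => if Nat.eqb k m then c else 0) n = if Nat.leb m n then c else 0.
Proof.
  induction n.
  - rewrite sum_O. destruct m; simpl; reflexivity.
  - rewrite sum_Sn, IHn. change (@plus _ ?x ?y) with (x + y).
    destruct (Nat.eqb_spec (S n) m); destruct (Nat.leb_spec m n); destruct (Nat.leb_spec m (S n)); try lia; lra.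
Qed.

Lemma is_series_single m c : is_series (fun k => if Nat.eqb k m then c else 0) c.
Proof.
  pose proof (is_series_fin (fun k => if Nat.eqb k m then c else 0) m) as Hs.
  rewrite sum_n_single, Nat.leb_refl in Hs. apply Hs.
  intros n Hn. destruct (Nat.eqb_spec n m); [lia|auto].
Qed.

Lemma sig_facts lam : 4 < lam ->
  0 < sqrt ((2-lam)^2-4) /\ sqrt ((2-lam)^2-4) * sqrt ((2-lam)^2-4) = (2-lam)^2-4 /\
  -1 < sigma_plus lam < 0 /\ sigma_plus lam ^2 + (lam-2)*sigma_plus lam + 1 = 0 /\
  sigma_plus lam * ((lam - 2) + sqrt ((2-lam)^2-4)) = -2.
Proof.
  intros H. assert (Hp : 0 < (2-lam)^2-4) by nra.
  pose proof (sqrt_lt_R0 _ Hp) as Hs. pose proof (sqrt_sqrt _ (Rlt_le _ _ Hp)) as Hss.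
  set (s := sqrt ((2-lam)^2-4)) in *. unfold sigma_plus. fold s.
  repeat split; try lra; try nra.
Qed.

Lemma F_pos p lam : (1 <= p)%nat -> 4 < lam <= INR p -> Ffun p lam > 0.
Proof.
  intros Hp H. destruct (sig_facts lam) as (_&_&[H1 H2]&_&_); [lra|].
  assert (1 <= INR p) by (apply le_INR in Hp; simpl in Hp; lra).
  unfold Ffun. nra.
Qed.

Lemma F_neg p lam : INR p + 2 <= lam -> 4 < lam -> Ffun p lam < 0.
Proof.
  intros Hp H. destruct (sig_facts lam) as (_&_&[H1 H2]&_&_); [lra|].
  unfold Ffun. nra.
Qed.

Lemma F_decr p l1 l2 : (5 <= p)%nat -> INR p < l1 -> l1 < l2 -> Ffun p l2 < Ffun p l1.
Proof.
  intros Hp H1 H12. assert (5 <= INR p) by (apply le_INR in Hp; simpl in Hp; lra).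
  destruct (sig_facts l1) as (A1&_&[B1 C1]&_&D1); [lra|].
  destruct (sig_facts l2) as (A2&_&[B2 C2]&_&D2); [lra|].
  assert (Hs : sqrt ((2-l1)^2-4) <= sqrt ((2-l2)^2-4)) by (apply sqrt_le_1_alt; nra).
  set (s1 := sqrt ((2-l1)^2-4)) in *. set (s2 := sqrt ((2-l2)^2-4)) in *.
  set (g1 := sigma_plus l1) in *. set (g2 := sigma_plus l2) in *.
  assert (Hg : g1 <= g2) by nra.
  unfold Ffun. fold g1 g2.
  assert (E : (1 - l2) * g2 - (1 - l1) * g1 <= (l2 - l1)) by nra.
  nra.
Qed.

Lemma plusR (a b : R) : plus a b = a + b. Proof. reflexivity. Qed.
Lemma multR (a b : R) : mult a b = a * b. Proof. reflexivity. Qed.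
Lemma oppR (a : R) : opp a = - a. Proof. reflexivity. Qed.

Lemma F_cont p x : 4 < x -> continuity_pt (Ffun p) x.
Proof.
  intros H. apply continuity_pt_filterlim. apply (@ex_derive_continuous R_AbsRing R_NormedModule (Ffun p) x).
  unfold Ffun, sigma_plus. auto_derive. nra.
Qed.

Lemma EK_series p w : (2 <= p)%nat -> in_EK p w -> is_series (fun n => w (vtx p n)) 0.
Proof.
  intros Hp [_ [Hsup Hsum]].
  pose proof (is_series_fin (fun n => w (vtx p n)) (p - 2)) as Hs.
  replace (sum_n (fun n => w (vtx p n)) (p - 2)) with 0 in Hs.
  - apply Hs. intros n Hn. apply Hsup. unfold vtx. lia.
  - rewrite sum_n_seq. rewrite <- Hsum at 1. symmetry. unfold zrange.
    replace (Z.to_nat (-1 - (1 - Z.of_nat p) + 1)) with (S (p - 2)) by lia.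
    rewrite map_map. reflexivity.
Qed.

Lemma INR_pm1 p : (1 <= p)%nat -> INR (Z.to_nat (-1 - (1 - Z.of_nat p) + 1)) = INR p - 1.
Proof.
  intros. replace (Z.to_nat (-1 - (1 - Z.of_nat p) + 1)) with (p - 1)%nat by lia.
  rewrite minus_INR by lia. simpl. lra.
Qed.

Section Back.
Variable p : nat.
Variable lam : R.
Hypothesis hp : (5 <= p)%nat.
Hypothesis hl : 4 < lam.

Definition vdef (i : Z) : R :=
  if Z.ltb i (1 - Z.of_nat p) then 0 else if Z.ltb i 0 then 1
  else (1 - lam) * sigma_plus lam ^ (Z.to_nat i).

Lemma vdef_out i : (i < 1 - Z.of_nat p)%Z -> vdef i = 0.
Proof. intros. unfold vdef. destruct (Z.ltb_spec i (1 - Z.of_nat p)); [auto|lia]. Qed.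
Lemma vdef_K i : (1 - Z.of_nat p <= i <= -1)%Z -> vdef i = 1.
Proof. intros. unfold vdef. destruct (Z.ltb_spec i (1 - Z.of_nat p)); [lia|].
  destruct (Z.ltb_spec i 0); [auto|lia]. Qed.
Lemma vdef_P n : vdef (Z.of_nat n) = (1 - lam) * sigma_plus lam ^ n.
Proof. unfold vdef. destruct (Z.ltb_spec (Z.of_nat n) (1 - Z.of_nat p)); [lia|].
  destruct (Z.ltb_spec (Z.of_nat n) 0); [lia|]. rewrite Nat2Z.id. auto. Qed.

Lemma vdef_l2 : l2 p vdef.
Proof.
  split.
  - intros i Hi. apply vdef_out. unfold is_vertex in Hi. lia.
  - apply (ex_series_incr_n _ (p - 1)).
    apply (ex_series_ext (fun k => scal ((1 - lam)^2) ((sigma_plus lam ^ 2) ^ k))).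
    + intros k. unfold scal; simpl. unfold mult; simpl.
      replace (vtx p (p - 1 + k)) with (Z.of_nat k) by (unfold vtx; lia).
      rewrite vdef_P. rewrite !Rmult_1_r, Rpow_mult_distr. match goal with |- ?a = ?b => change (@eq R a b) end. ring.
    + apply (@ex_series_scal_l R_AbsRing R_NormedModule). apply ex_series_geom.
      destruct (sig_facts lam hl) as (_&_&[H1 H2]&_&_).
      rewrite Rabs_right by nra. nra.
Qed.

Lemma vdef_perp : in_EK_perp p vdef.
Proof.
  split; [apply vdef_l2|].
  intros w Hw. unfold inner.
  apply is_series_unique.
  apply (is_series_ext (fun n => w (vtx p n))); [|apply EK_series; auto; lia].
  intros n. match goal with |- ?a = ?b => change (@eq R a b) end. destruct Hw as [_ [Hsup _]].
  destruct (Nat.ltb_spec n (p - 1)).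
  - rewrite vdef_K by (unfold vtx; lia). ring.
  - rewrite Hsup by (unfold vtx; lia). ring.
Qed.

Lemma vdef_eig (HF : Ffun p lam = 0) : forall i, is_vertex p i -> Lap p vdef i = lam * vdef i.
Proof.
  destruct (sig_facts lam hl) as (_&_&[H1 H2]&Hq&_).
  intros i Hi. unfold is_vertex in Hi. rewrite Lap_sum.
  destruct (Z_lt_le_dec i 0) as [Hi0|Hi0]; [|destruct (Z.eq_dec i 0) as [->|Hne]].
  - rewrite window_K by lia. rewrite SZ_app.
    rewrite (SZ_const _ _ 0).
    2:{ intros x Hx. apply zrange_In in Hx. rewrite !vdef_K by lia. destruct adjb; ring. }
    unfold SZ; simpl.
    rewrite (adjb_t p i 0) by lia. rewrite (adjb_f p i 1) by lia. rewrite (adjb_f p i 2) by lia.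
    rewrite vdef_K by lia. change 0%Z with (Z.of_nat 0). rewrite vdef_P. simpl. ring.
  - rewrite window_K by lia. rewrite SZ_app.
    rewrite (SZ_const _ _ (vdef 0 - 1)).
    2:{ intros x Hx. apply zrange_In in Hx. rewrite (vdef_K x) by lia. rewrite adjb_t by lia. auto. }
    rewrite zrange_length, INR_pm1 by lia.
    unfold SZ; simpl.
    rewrite (adjb_f p 0 0) by lia. rewrite (adjb_t p 0 1) by lia. rewrite (adjb_f p 0 2) by lia.
    change 0%Z with (Z.of_nat 0). change 1%Z with (Z.of_nat 1). rewrite !vdef_P.
    unfold Ffun in HF. simpl. nra.
  - rewrite window_P by lia. rewrite SZ_app.
    rewrite (SZ_const _ _ 0).
    2:{ intros x Hx. apply zrange_In in Hx. rewrite adjb_f by lia. auto. }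
    unfold SZ; simpl.
    rewrite (adjb_t p i (i-1)) by lia. rewrite (adjb_f p i i) by lia. rewrite (adjb_t p i (i+1)) by lia.
    destruct (Z.to_nat i) as [|m] eqn:E; [lia|].
    replace i with (Z.of_nat (S m)) by lia.
    replace (Z.of_nat (S m) - 1)%Z with (Z.of_nat m) by lia.
    replace (Z.of_nat (S m) + 1)%Z with (Z.of_nat (S (S m))) by lia.
    rewrite !vdef_P. simpl.
    apply Rminus_diag_uniq.
    match goal with |- ?X = 0 => replace X with (-(1-lam)*sigma_plus lam ^ m * (sigma_plus lam ^ 2 + (lam - 2) * sigma_plus lam + 1)) by ring end.
    rewrite Hq. ring.
Qed.

End Back.

Ltac Req := match goal with |- ?a = ?b => change (@eq R a b) end.

Section Fwd.
Variable p : nat.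
Variable lam : R.
Hypothesis hp : (5 <= p)%nat.
Hypothesis hl : 4 < lam.
Variable v : Z -> R.
Hypothesis Hl2 : l2 p v.
Hypothesis Hperp : in_EK_perp p v.
Hypothesis Heig : forall i, is_vertex p i -> Lap p v i = lam * v i.

Definition wk (k : Z) (j : Z) : R := (if Z.eqb j (-1) then 1 else 0) - (if Z.eqb j k then 1 else 0).

Lemma wk_EK k : (1 - Z.of_nat p <= k <= -1)%Z -> in_EK p (wk k).
Proof.
  intros Hk. unfold wk. split; [split|split].
  - intros i Hi. unfold is_vertex in Hi.
    destruct (Z.eqb_spec i (-1)); destruct (Z.eqb_spec i k); try lia. ring.
  - exists (sum_n (fun n => (wk k (vtx p n))^2) p). apply is_series_fin.
    intros n Hn. unfold wk, vtx.
    destruct (Z.eqb_spec (1 - Z.of_nat p + Z.of_nat n) (-1)); destruct (Z.eqb_spec (1 - Z.of_nat p + Z.of_nat n) k); try lia. ring.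
  - intros i Hi. destruct (Z.eqb_spec i (-1)); destruct (Z.eqb_spec i k); try lia. ring.
  - change (SZ (zrange (1 - Z.of_nat p) (-1)) (fun j => (if Z.eqb j (-1) then 1 else 0) - (if Z.eqb j k then 1 else 0)) = 0).
    rewrite SZ_minus, !SZ_ind by lia. ring.
Qed.

Lemma K_const k : (1 - Z.of_nat p <= k <= -1)%Z -> v k = v (-1).
Proof.
  intros Hk. destruct Hperp as [_ H]. specialize (H _ (wk_EK k Hk)). unfold inner in H.
  assert (Hs : is_series (fun n => v (vtx p n) * wk k (vtx p n)) (v (-1) - v k)).
  { apply (is_series_ext (fun n => plus (if Nat.eqb n (p - 2) then v (-1) else 0)
             (opp (if Nat.eqb n (Z.to_nat (k + Z.of_nat p - 1)) then v k else 0)))).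
    - intros n. unfold plus, opp; simpl. Req. unfold wk, vtx.
      destruct (Nat.eqb_spec n (p - 2)); destruct (Nat.eqb_spec n (Z.to_nat (k + Z.of_nat p - 1)));
      destruct (Z.eqb_spec (1 - Z.of_nat p + Z.of_nat n) (-1)); destruct (Z.eqb_spec (1 - Z.of_nat p + Z.of_nat n) k);
      try lia; subst; try (replace (1 - Z.of_nat p + Z.of_nat (p - 2))%Z with (-1)%Z in * by lia);
      try (replace (1 - Z.of_nat p + Z.of_nat (Z.to_nat (k + Z.of_nat p - 1)))%Z with k in * by lia); try ring.
    - apply (is_series_minus _ _ (v (-1)) (v k)); apply is_series_single. }
  apply is_series_unique in Hs. lra.
Qed.

Definition c (n : nat) : R := v (Z.of_nat n).

Lemma E1 : c 0 = (1 - lam) * v (-1).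
Proof.
  pose proof (Heig (-1) ltac:(unfold is_vertex; lia)) as H. rewrite Lap_sum, window_K, SZ_app in H by lia.
  rewrite (SZ_const _ _ 0) in H.
  2:{ intros x Hx. apply zrange_In in Hx. rewrite (K_const x) by lia. destruct adjb; ring. }
  unfold SZ in H; simpl in H.
  rewrite (adjb_t p (-1) 0), (adjb_f p (-1) 1), (adjb_f p (-1) 2) in H by lia.
  rewrite Rmult_0_r in H. unfold c; simpl. lra.
Qed.

Lemma E2 : (INR p - 1) * (c 0 - v (-1)) + (c 0 - c 1) = lam * c 0.
Proof.
  pose proof (Heig 0 ltac:(unfold is_vertex; lia)) as H. rewrite Lap_sum, window_K, SZ_app in H by lia.
  rewrite (SZ_const _ _ (v 0 - v (-1))) in H.
  2:{ intros x Hx. apply zrange_In in Hx. rewrite (K_const x) by lia. rewrite adjb_t by lia. auto. }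
  rewrite zrange_length, INR_pm1 in H by lia.
  unfold SZ in H; simpl in H.
  rewrite (adjb_f p 0 0), (adjb_t p 0 1), (adjb_f p 0 2) in H by lia.
  unfold c; simpl. lra.
Qed.

Lemma E3 m : c (S (S m)) = (2 - lam) * c (S m) - c m.
Proof.
  pose proof (Heig (Z.of_nat (S m)) ltac:(unfold is_vertex; lia)) as H.
  rewrite Lap_sum, window_P, SZ_app in H by lia.
  rewrite (SZ_const _ _ 0) in H.
  2:{ intros x Hx. apply zrange_In in Hx. rewrite adjb_f by lia. auto. }
  rewrite Rmult_0_r in H.
  unfold SZ in H. cbn [map fold_right] in H.
  rewrite (adjb_t p _ (Z.of_nat (S m) - 1)), (adjb_f p _ (Z.of_nat (S m))), (adjb_t p _ (Z.of_nat (S m) + 1)) in H by lia.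
  replace (Z.of_nat (S m) - 1)%Z with (Z.of_nat m) in H by lia.
  replace (Z.of_nat (S m) + 1)%Z with (Z.of_nat (S (S m))) in H by lia.
  unfold c. lra.
Qed.


Lemma c_small : exists N, forall m, (N <= m)%nat -> Rabs (c m) < 1.
Proof.
  destruct Hl2 as [_ Hs]. apply ex_series_lim_0 in Hs. apply is_lim_seq_spec in Hs.
  destruct (Hs (mkposreal 1 Rlt_0_1)) as [N HN]. exists N. intros m Hm.
  specialize (HN (m + (p - 1))%nat ltac:(lia)). simpl in HN.
  replace (vtx p (m + (p - 1))) with (Z.of_nat m) in HN by (unfold vtx; lia).
  fold (c m) in HN. rewrite Rminus_0_r in HN.
  rewrite Rabs_right in HN by (apply Rle_ge; apply pow2_ge_0).
  apply Rabs_def1; nra.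
Qed.

Lemma c1_sig : c 1 = sigma_plus lam * c 0.
Proof.
  destruct (sig_facts lam hl) as (Hs0&Hss&[H1 H2]&Hq&_).
  set (s := sqrt ((2 - lam) ^ 2 - 4)) in *.
  set (sg := sigma_plus lam) in *.
  assert (Hsg : sg = ((2 - lam) + s) / 2) by reflexivity.
  set (tau := ((2 - lam) - s) / 2).
  assert (Hsum : sg + tau = 2 - lam) by (unfold tau; lra).
  assert (Hprod : sg * tau = 1) by (unfold tau; rewrite Hsg; nra).
  assert (Htau : tau < -1) by (unfold tau; nra).
  set (d := fun n => c (S n) - sg * c n).
  assert (Hd : forall n, d n = tau ^ n * d 0%nat).
  { induction n. simpl; ring.
    rewrite <- tech_pow_Rmult, Rmult_assoc, <- IHn. unfold d. rewrite E3.
    rewrite <- Hsum. apply Rminus_diag_uniq.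
    match goal with |- ?X = 0 => replace X with ((sg * tau - 1) * c n) by ring end.
    rewrite Hprod. ring. }
  destruct (Req_dec (d 0%nat) 0) as [H0|H0].
  { unfold d in H0. lra. }
  exfalso. destruct c_small as [N HN].
  set (e := - tau - 1).
  assert (He : 0 < e) by (unfold e; lra).
  assert (Hd0 : 0 < Rabs (d 0%nat)) by (apply Rabs_pos_lt; auto).
  destruct (INR_archimed (e * Rabs (d 0%nat)) 2) as [n0 Hn0]; [nra|].
  set (n := (N + n0)%nat).
  assert (Hb : Rabs (d n) < 2).
  { unfold d. pose proof (HN n ltac:(unfold n; lia)) as A1. pose proof (HN (S n) ltac:(unfold n; lia)) as A2.
    apply Rabs_def2 in A1. apply Rabs_def2 in A2. apply Rabs_def1; nra. }
  rewrite Hd, Rabs_mult, <- RPow_abs in Hb.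
  replace (Rabs tau) with (1 + e) in Hb by (rewrite Rabs_left by lra; unfold e; ring).
  pose proof (Rle_pow_lin e n (Rlt_le _ _ He)) as Hp.
  assert (INR n0 <= INR n) by (apply le_INR; unfold n; lia).
  pose proof (pos_INR n0).
  assert (S1 : (1 + INR n * e) * Rabs (d 0%nat) <= (1 + e) ^ n * Rabs (d 0%nat)) by (apply Rmult_le_compat_r; lra).
  assert (S2 : INR n0 * e * Rabs (d 0%nat) <= INR n * e * Rabs (d 0%nat)) by (apply Rmult_le_compat_r; [lra|]; apply Rmult_le_compat_r; lra).
  nra.
Qed.

Lemma fwd_F (Hnz : exists i, v i <> 0) : Ffun p lam = 0.
Proof.
  pose proof E1 as e1. pose proof E2 as e2. pose proof c1_sig as e3.
  assert (Fa : Ffun p lam * v (-1) = 0).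
  { replace (Ffun p lam * v (-1)) with
      (sigma_plus lam * ((1 - lam) * v (-1)) - c 1 - ((INR p - 1) * ((1 - lam) * v (-1) - v (-1)) + ((1 - lam) * v (-1) - c 1) - lam * ((1 - lam) * v (-1)))) by (unfold Ffun; ring).
    rewrite <- e1. lra. }
  destruct (Req_dec (v (-1)) 0) as [Ha|Ha].
  - exfalso. destruct Hnz as [i Hi]. apply Hi.
    assert (Hc : forall n, c n = 0 /\ c (S n) = 0).
    { induction n.
      - split; [rewrite e1, Ha; ring|]. rewrite e3, e1, Ha. ring.
      - destruct IHn as [I1 I2]. split; auto. rewrite E3, I1, I2. ring. }
    destruct (Z_lt_le_dec i (1 - Z.of_nat p)).
    + apply (proj1 Hl2). unfold is_vertex. lia.
    + destruct (Z_lt_le_dec i 0).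
      * rewrite K_const by lia. auto.
      * replace i with (Z.of_nat (Z.to_nat i)) by lia. apply (Hc (Z.to_nat i)).
  - apply Rmult_integral in Fa. destruct Fa; [auto|contradiction].
Qed.

End Fwd.

Theorem proposition4 (p : nat) (hp : (5 <= p)%nat) :
  (forall lam : R, 4 < lam -> (eig_EKperp p lam <-> Ffun p lam = 0)) /\
  (exists! lam : R, INR p < lam < INR p + 2 /\ Ffun p lam = 0) /\
  (forall lam : R, (4 < lam <= INR p \/ INR p + 2 <= lam) -> Ffun p lam <> 0).
Proof.
  assert (H5 : 5 <= INR p) by (apply le_INR in hp; simpl in hp; lra).
  split; [|split].
  - intros lam Hl. split.
    + intros [v [Hv [Hnz [Hperp Heig]]]]. eapply fwd_F; eauto.
    + intros HF. exists (vdef p lam). split; [|split; [|split]].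
      * apply vdef_l2; auto.
      * exists (-1)%Z. rewrite vdef_K by lia. lra.
      * apply vdef_perp; auto.
      * apply vdef_eig; auto.
  - assert (Hc : forall a, INR p <= a <= INR p + 2 -> continuity_pt (fun x => - Ffun p x) a).
    { intros a Ha. apply (continuity_pt_opp (Ffun p)). apply F_cont. lra. }
    destruct (Ranalysis5.IVT_interv (fun x => - Ffun p x) (INR p) (INR p + 2) Hc) as [z [Hz Fz]].
    + lra.
    + pose proof (F_pos p (INR p) ltac:(lia) ltac:(lra)). lra.
    + pose proof (F_neg p (INR p + 2) ltac:(lra) ltac:(lra)). lra.
    + assert (Fz' : Ffun p z = 0) by lra.
      assert (z <> INR p) by (intros ->; pose proof (F_pos p (INR p) ltac:(lia) ltac:(lra)); lra).
      assert (z <> INR p + 2) by (intros ->; pose proof (F_neg p (INR p + 2) ltac:(lra) ltac:(lra)); lra).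
      exists z. split; [split; [lra|auto]|].
      intros y [Hy Fy]. destruct (Rtotal_order y z) as [Hlt|[Heq|Hgt]]; auto.
      * pose proof (F_decr p y z hp ltac:(lra) Hlt). lra.
      * pose proof (F_decr p z y hp ltac:(lra) Hgt). lra.
  - intros lam [H|H].
    + pose proof (F_pos p lam ltac:(lia) H). lra.
    + pose proof (F_neg p lam H ltac:(lra)). lra.
Qed.
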